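(* Fix any total budget $\mathrm{TB}\in\mathbb N_0$. For every $k\in\mathbb N$, $-1/2^k<*<1/2^k$, where $*=\{0\mid 0\}$.
   Context: Game forms are defined recursively: $G=\{G^{\mathcal L}\mid G^{\mathcal R}\}$ with finite sets of Left and Right options, and finite birthday. $0=\{\varnothing\mid\varnothing\}$, $1=\{0\mid\varnothing\}$, $*=\{0\mid 0\}$. Dyadic game forms: $1/2^0=1$ and for $k\in\mathbb N$, $1/2^k=\{0\mid 1/2^{k-1}\}$; $-1/2^k=\overline{1/2^k}$, where the conjugate is $\bar G=\{\overline{G^{\mathcal R}}\mid\overline{G^{\mathcal L}}\}$. The budget set for total budget $\mathrm{TB}$ is $\mathcal B=\{0,\dots,\mathrm{TB},\hat 0,\dots,\widehat{\mathrm{TB}}\}$: state $p$ (resp. $\hat p$) means Left holds $p$ dollars and Right holds $\mathrm{TB}-p$, and Right (resp. Left) holds the tie-breaking marker. Play of $(G,\tilde p)$: at every position (terminal ones included) both players bid simultaneously, Left $\ell\in\{0,\dots,p\}$, Right $r\in\{0,\dots,\mathrm{TB}-p\}$. If Left holds the marker (state $\hat p$): if $\ell>r$ Left moves to $(G^L,\widehat{p-\ell})$, or, including the marker (allowed when $\ell\ge r$), to $(G^L,p-\ell)$; if $\ell=r$ Left wins, the marker passes to Right, play continues at $(G^L,p-\ell)$; if $\ell<r$ Right moves to $(G^R,\widehat{p+r})$. Symmetrically when Right holds the marker (state $p$): if $r>\ell$ Right moves to $(G^R,p+r)$ or, including the marker, to $(G^R,\widehat{p+r})$; if $r=\ell$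 Right wins, the marker passes to Left, play continues at $(G^R,\widehat{p+r})$; if $r<\ell$ Left moves to $(G^L,p-\ell)$. A player who wins a bid but has no option loses. $o(G,\tilde p)\in\{\mathrm L,\mathrm R\}$ is the winner under optimal play; $\mathrm L>\mathrm R$. Disjunctive sum $G+H=\{G^{\mathcal L}+H,G+H^{\mathcal L}\mid G^{\mathcal R}+H,G+H^{\mathcal R}\}$. $G\ge H$ means $o(G+X,\tilde p)\ge o(H+X,\tilde p)$ for all game forms $X$ and all $\tilde p\in\mathcal B$; $G>H$ means $G\ge H$ and not $H\ge G$; $G<H$ means $H>G$. *)

(* Defs.v *)
From Stdlib Require Import List Arith.
Import ListNotations.

Inductive game : Type := Gm : list game -> list game -> game.

Definition zero : game := Gm [] [].
Definition one : game := Gm [zero] [].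
Definition star : game := Gm [zero] [zero].

Fixpoint conj (g : game) : game :=
  match g with Gm gl gr => Gm (map conj gr) (map conj gl) end.

(* dyadic 1/2^k *)
Fixpoint dyadic (k : nat) : game :=
  match k with 0 => one | S k' => Gm [zero] [dyadic k'] end.

Definition neg_dyadic (k : nat) : game := conj (dyadic k).

Fixpoint add (g h : game) {struct g} : game :=
  match g with
  | Gm gl gr =>
    (fix addg (h : game) : game :=
       match h with
       | Gm hl hr =>
         Gm (map (fun x => add x h) gl ++ map addg hl)
            (map (fun x => add x h) gr ++ map addg hr)
       end) h
  end.

(* Budget state (p, m) with total budget TB: Left holds p dollars, Right
   holds TB - p; m = true means Left holds the tie-breaking marker (state
   \hat p), m = false means Right holds it (state p). *)
Fixpoint LeftWins (TB : nat) (g : game) (p : nat) (m : bool) {struct g} : Prop :=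
  match g with
  | Gm gl gr =>
    let exL := fun q mk =>
      (fix ex (l : list game) : Prop :=
         match l with [] => False | h :: t => LeftWins TB h q mk \/ ex t end) gl in
    let allR := fun q mk =>
      (fix al (l : list game) : Prop :=
         match l with [] => True | h :: t => LeftWins TB h q mk /\ al t end) gr in
    exists l, l <= p /\
      forall r, r <= TB - p ->
        if m then
          (r < l -> exL (p - l) true \/ exL (p - l) false) /\
          (l = r -> exL (p - l) false) /\
          (l < r -> allR (p + r) true)
        else
          (r < l -> exL (p - l) false) /\
          (l = r -> allR (p + r) true) /\
          (l < r -> allR (p + r) false /\ allR (p + r) true)
  end.

Definition outcomeL (TB : nat) (g : game) (p : nat) (m : bool) : Prop :=
  LeftWins TB g p m.

(* G >= H : o(G+X, p~) >= o(H+X, p~) for all X and all p~ in the budget set;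
   since L > R this means o(H+X,p~) = L implies o(G+X,p~) = L. *)
Definition game_ge (TB : nat) (g h : game) : Prop :=
  forall (x : game) (p : nat) (m : bool), p <= TB ->
    outcomeL TB (add h x) p m -> outcomeL TB (add g x) p m.

Definition game_gt (TB : nat) (g h : game) : Prop :=
  game_ge TB g h /\ ~ game_ge TB h g.

(* Main.v *)
Require Import Defs.
From Stdlib Require Import List Arith Lia Classical.
Import ListNotations.

Section Aux.

Fixpoint game_ind' (P : game -> Prop)
  (H : forall gl gr, Forall P gl -> Forall P gr -> P (Gm gl gr)) (g : game) : P g :=
  match g with
  | Gm gl gr =>
    H gl gr
      ((fix f (l : list game) : Forall P l :=
          match l with [] => Forall_nil _ | h :: t => Forall_cons _ (game_ind' P H h) (f t) end) gl)
      ((fix f (l : list game) : Forall P l :=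
          match l with [] => Forall_nil _ | h :: t => Forall_cons _ (game_ind' P H h) (f t) end) gr)
  end.

Definition ExL TB (gl : list game) q mk := exists h, In h gl /\ LeftWins TB h q mk.
Definition AllR TB (gr : list game) q mk := forall h, In h gr -> LeftWins TB h q mk.

Definition Cond (TB : nat) (E A : nat -> bool -> Prop) (p : nat) (m : bool) (l : nat) : Prop :=
  forall r, r <= TB - p ->
    if m then
      (r < l -> E (p - l) true \/ E (p - l) false) /\
      (l = r -> E (p - l) false) /\
      (l < r -> A (p + r) true)
    else
      (r < l -> E (p - l) false) /\
      (l = r -> A (p + r) true) /\
      (l < r -> A (p + r) false /\ A (p + r) true).

Lemma Cond_mono TB (E E' A A' : nat -> bool -> Prop) p m l :
  (forall q mk, E q mk -> E' q mk) -> (forall q mk, A q mk -> A' q mk) ->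
  Cond TB E A p m l -> Cond TB E' A' p m l.
Proof.
  intros HE HA H r Hr. specialize (H r Hr). destruct m.
  - destruct H as [H1 [H2 H3]]. split; [|split]; intros; auto.
    destruct (H1 H); auto.
  - destruct H as [H1 [H2 H3]]. split; [|split]; intros; auto.
    destruct (H3 H); auto.
Qed.

Lemma exfix TB q mk : forall l,
  (fix ex (l : list game) : Prop :=
     match l with [] => False | h :: t => LeftWins TB h q mk \/ ex t end) l
  <-> ExL TB l q mk.
Proof.
  unfold ExL. induction l as [|h t IH]; simpl.
  - split; [tauto|]. intros [x [[] _]].
  - rewrite IH. split.
    + intros [H|[x [Hx Hx']]]; eauto.
    + intros [x [[<-|Hx] Hx']]; eauto.
Qed.

Lemma allfix TB q mk : forall l,
  (fix al (l : list game) : Prop :=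
     match l with [] => True | h :: t => LeftWins TB h q mk /\ al t end) l
  <-> AllR TB l q mk.
Proof.
  unfold AllR. induction l as [|h t IH]; simpl.
  - split; auto. intros _ x [].
  - rewrite IH. split.
    + intros [H1 H2] x [<-|Hx]; auto.
    + intros H; split; auto.
Qed.

Lemma LW_iff TB gl gr p m :
  LeftWins TB (Gm gl gr) p m <->
  exists l, l <= p /\ Cond TB (ExL TB gl) (AllR TB gr) p m l.
Proof.
  simpl. split; intros [l [Hl H]]; exists l; split; auto.
  - intros r Hr. specialize (H r Hr). destruct m;
    rewrite ?exfix, ?allfix in H; exact H.
  - intros r Hr. specialize (H r Hr). destruct m;
    rewrite ?exfix, ?allfix; exact H.
Qed.

Lemma add_unfold gl gr xl xr :
  add (Gm gl gr) (Gm xl xr) =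
  Gm (map (fun g => add g (Gm xl xr)) gl ++ map (add (Gm gl gr)) xl)
     (map (fun g => add g (Gm xl xr)) gr ++ map (add (Gm gl gr)) xr).
Proof. reflexivity. Qed.

Lemma ExL_sum TB (gl xl : list game) (f g : game -> game) q mk :
  ExL TB (map f gl ++ map g xl) q mk <->
  (exists a, In a gl /\ LeftWins TB (f a) q mk) \/ (exists x, In x xl /\ LeftWins TB (g x) q mk).
Proof.
  unfold ExL. split.
  - intros [h [Hh H]]. apply in_app_or in Hh. destruct Hh as [Hh|Hh];
    apply in_map_iff in Hh; destruct Hh as [a [<- Ha]]; eauto.
  - intros [[a [Ha H]]|[a [Ha H]]]; eexists; split; try eassumption;
    apply in_or_app; [left|right]; apply in_map; auto.
Qed.

Lemma AllR_sum TB (gl xl : list game) (f g : game -> game) q mk :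
  AllR TB (map f gl ++ map g xl) q mk <->
  (forall a, In a gl -> LeftWins TB (f a) q mk) /\ (forall x, In x xl -> LeftWins TB (g x) q mk).
Proof.
  unfold AllR. split.
  - intros H; split; intros a Ha; apply H; apply in_or_app; [left|right]; apply in_map; auto.
  - intros [H1 H2] h Hh. apply in_app_or in Hh. destruct Hh as [Hh|Hh];
    apply in_map_iff in Hh; destruct Hh as [a [<- Ha]]; auto.
Qed.

Lemma LW_add TB gl gr xl xr p m :
  LeftWins TB (add (Gm gl gr) (Gm xl xr)) p m <->
  exists l, l <= p /\ Cond TB
    (fun q mk => (exists g, In g gl /\ LeftWins TB (add g (Gm xl xr)) q mk) \/
                 (exists x, In x xl /\ LeftWins TB (add (Gm gl gr) x) q mk))
    (fun q mk => (forall g, In g gr -> LeftWins TB (add g (Gm xl xr)) q mk) /\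
                 (forall x, In x xr -> LeftWins TB (add (Gm gl gr) x) q mk)) p m l.
Proof.
  rewrite add_unfold, LW_iff. split; intros [l [Hl H]]; exists l; split; auto;
  (eapply Cond_mono; [| |exact H]); intros q mk;
  rewrite ?ExL_sum, ?AllR_sum; auto.
Qed.

Lemma add_zero_l : forall x, add zero x = x.
Proof.
  apply game_ind'. intros xl xr Hl Hr. unfold zero. rewrite add_unfold. simpl.
  f_equal; [induction Hl | induction Hr]; simpl; f_equal; auto.
Qed.

Lemma add_zero_r : forall x, add x zero = x.
Proof.
  apply game_ind'. intros xl xr Hl Hr. unfold zero. rewrite add_unfold.
  rewrite !app_nil_r.
  f_equal; [induction Hl | induction Hr]; simpl; f_equal; auto.
Qed.

Lemma mono1 TB : forall x p m, LeftWins TB x p m -> LeftWins TB x (S p) m.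
Proof.
  apply (game_ind' (fun x => forall p m, LeftWins TB x p m -> LeftWins TB x (S p) m)).
  intros gl gr Hl Hr p m H. rewrite LW_iff in *. destruct H as [l [Hl0 H]].
  exists l; split; [lia|]. intros r Hr0. assert (Hr1 : r <= TB - p) by lia.
  specialize (H r Hr1).
  assert (EL : forall mk, ExL TB gl (p - l) mk -> ExL TB gl (S p - l) mk).
  { intros mk [h [Hh Hw]]. exists h; split; auto.
    rewrite Forall_forall in Hl. replace (S p - l) with (S (p - l)) by lia. auto. }
  assert (AR : forall mk, AllR TB gr (p + r) mk -> AllR TB gr (S p + r) mk).
  { intros mk Ha h Hh. rewrite Forall_forall in Hr. apply Hr; auto. }
  destruct m; destruct H as [H1 [H2 H3]]; split; [|split| |split]; intros; auto.
  - destruct (H1 H); auto.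
  - destruct (H3 H); split; apply AR; auto.
Qed.

Lemma mono TB x p p' m : p <= p' -> LeftWins TB x p m -> LeftWins TB x p' m.
Proof. induction 1; auto. intros; apply mono1; auto. Qed.


Lemma coreA TB gl xl xr :
  (forall g, In g gl -> forall q mk, LeftWins TB (add g (Gm xl xr)) q mk -> LeftWins TB (Gm xl xr) q mk) ->
  (forall g, In g gl -> forall q, LeftWins TB (add g (Gm xl xr)) q false -> LeftWins TB (Gm xl xr) q true) ->
  (forall x, In x xl -> forall q mk, LeftWins TB (add (Gm gl [zero]) x) q mk -> LeftWins TB x q mk) ->
  (forall x, In x xr -> forall q mk, LeftWins TB (add (Gm gl [zero]) x) q mk -> LeftWins TB x q mk) ->
  forall p m, LeftWins TB (add (Gm gl [zero]) (Gm xl xr)) p m -> LeftWins TB (Gm xl xr) p m.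
Proof.
  intros HA HC IHl IHr p m H.
  destruct (classic (LeftWins TB (Gm xl xr) p m)) as [|Hn]; auto.
  rewrite LW_add in H. destruct H as [l [Hl H]].
  rewrite LW_iff. exists l; split; auto. intros r Hr. specialize (H r Hr).
  destruct m; destruct H as [H1 [H2 H3]].
  - split; [|split].
    + intro Hlt. destruct (H1 Hlt) as [[[g [Hg Hp]]|[x [Hx Hx']]]|[[g [Hg Hp]]|[x [Hx Hx']]]].
      * exfalso; apply Hn. apply (mono _ _ (p - l)); [lia|]. eapply HA; eauto.
      * left. exists x; split; eauto.
      * exfalso; apply Hn. apply (mono _ _ (p - l)); [lia|]. eapply HC; eauto.
      * right. exists x; split; eauto.
    + intro Heq. destruct (H2 Heq) as [[g [Hg Hp]]|[x [Hx Hx']]].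
      * exfalso; apply Hn. apply (mono _ _ (p - l)); [lia|]. eapply HC; eauto.
      * exists x; split; eauto.
    + intros Hlt x Hx. destruct (H3 Hlt) as [_ Hb]. eapply IHr; eauto.
  - split; [|split].
    + intro Hlt. destruct (H1 Hlt) as [[g [Hg Hp]]|[x [Hx Hx']]].
      * exfalso; apply Hn. apply (mono _ _ (p - l)); [lia|]. eapply HA; eauto.
      * exists x; split; eauto.
    + intros Heq x Hx. destruct (H2 Heq) as [_ Hb]. eapply IHr; eauto.
    + intros Hlt. destruct (H3 Hlt) as [[_ Hb] [_ Hc]]. split; intros x Hx; eapply IHr; eauto.
Qed.

Lemma coreC TB gl xl xr :
  (forall g, In g gl -> forall q, LeftWins TB (add g (Gm xl xr)) q false -> LeftWins TB (Gm xl xr) q true) ->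
  (forall x, In x xl -> forall q mk, LeftWins TB (add (Gm gl [zero]) x) q mk -> LeftWins TB x q mk) ->
  (forall x, In x xr -> forall q mk, LeftWins TB (add (Gm gl [zero]) x) q mk -> LeftWins TB x q mk) ->
  forall q, LeftWins TB (add (Gm gl [zero]) (Gm xl xr)) q false -> LeftWins TB (Gm xl xr) q true.
Proof.
  intros HC IHl IHr q H.
  destruct (classic (LeftWins TB (Gm xl xr) q true)) as [|Hn]; auto.
  rewrite LW_add in H. destruct H as [l [Hl H]].
  destruct l as [|l'].
  - exfalso. apply Hn. destruct (H 0 (Nat.le_0_l _)) as [_ [H2 _]].
    destruct (H2 eq_refl) as [Hz _]. specialize (Hz zero (or_introl eq_refl)).
    rewrite add_zero_l, Nat.add_0_r in Hz. exact Hz.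
  - rewrite LW_iff. exists l'; split; [lia|]. intros r Hr.
    assert (Hpass : (exists g, In g gl /\ LeftWins TB (add g (Gm xl xr)) (q - S l') false) \/
         (exists x, In x xl /\ LeftWins TB (add (Gm gl [zero]) x) (q - S l') false) ->
         ExL TB xl (q - l') false).
    { intros [[g [Hg Hp]]|[x [Hx Hx']]].
      - exfalso; apply Hn. apply (mono _ _ (q - S l')); [lia|]. eapply HC; eauto.
      - exists x; split; auto. apply (mono _ _ (q - S l')); [lia|]. eauto. }
    split; [|split].
    + intro Hlt. right. apply Hpass. destruct (H r Hr) as [H1 _]. apply H1; lia.
    + intro Heq. apply Hpass. destruct (H r Hr) as [H1 _]. apply H1; lia.
    + intros Hlt x Hx. destruct (Nat.eq_dec r (S l')) as [->|Hne].
      * destruct (H (S l') Hr) as [_ [H2 _]]. destruct (H2 eq_refl) as [_ Hb]. eauto.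
      * destruct (H r Hr) as [_ [_ H3]]. destruct (H3 ltac:(lia)) as [_ [_ Hb]]. eauto.
Qed.

Lemma coreB TB gr xl xr :
  (forall g, In g gr -> forall q mk, LeftWins TB (Gm xl xr) q mk -> LeftWins TB (add g (Gm xl xr)) q mk) ->
  (forall g, In g gr -> forall q, LeftWins TB (Gm xl xr) q false -> LeftWins TB (add g (Gm xl xr)) q true) ->
  (forall x, In x xl -> forall q mk, LeftWins TB x q mk -> LeftWins TB (add (Gm [zero] gr) x) q mk) ->
  (forall x, In x xr -> forall q mk, LeftWins TB x q mk -> LeftWins TB (add (Gm [zero] gr) x) q mk) ->
  forall p m, LeftWins TB (Gm xl xr) p m -> LeftWins TB (add (Gm [zero] gr) (Gm xl xr)) p m.
Proof.
  intros HB HB' IHl IHr p m H0.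
  pose proof H0 as H. rewrite LW_iff in H. destruct H as [l [Hl H]].
  rewrite LW_add. exists l; split; auto. intros r Hr. specialize (H r Hr).
  destruct m; destruct H as [H1 [H2 H3]].
  - split; [|split].
    + intro Hlt. destruct (H1 Hlt) as [[x [Hx Hx']]|[x [Hx Hx']]];
        [left|right]; right; exists x; split; eauto.
    + intro Heq. destruct (H2 Heq) as [x [Hx Hx']]. right; exists x; split; eauto.
    + intros Hlt. split.
      * intros g Hg. apply HB; auto. apply (mono _ _ p); [lia|auto].
      * intros x Hx. apply IHr; auto. apply H3; auto.
  - split; [|split].
    + intro Hlt. destruct (H1 Hlt) as [x [Hx Hx']]. right; exists x; split; eauto.
    + intros Heq. split.
      * intros g Hg. apply HB'; auto. apply (mono _ _ p); [lia|auto].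
      * intros x Hx. apply IHr; auto. apply H2; auto.
    + intros Hlt. destruct (H3 Hlt) as [Ha Hb]. split; split.
      * intros g Hg. apply HB; auto. apply (mono _ _ p); [lia|auto].
      * intros x Hx. apply IHr; auto.
      * intros g Hg. apply HB'; auto. apply (mono _ _ p); [lia|auto].
      * intros x Hx. apply IHr; auto.
Qed.

Lemma coreB' TB gr xl xr :
  (forall g, In g gr -> forall q, LeftWins TB (Gm xl xr) q false -> LeftWins TB (add g (Gm xl xr)) q true) ->
  (forall x, In x xl -> forall q mk, LeftWins TB x q mk -> LeftWins TB (add (Gm [zero] gr) x) q mk) ->
  (forall x, In x xr -> forall q mk, LeftWins TB x q mk -> LeftWins TB (add (Gm [zero] gr) x) q mk) ->
  forall q, LeftWins TB (Gm xl xr) q false -> LeftWins TB (add (Gm [zero] gr) (Gm xl xr)) q true.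
Proof.
  intros HB' IHl IHr q H0.
  pose proof H0 as H. rewrite LW_iff in H. destruct H as [l [Hl H]].
  rewrite LW_add. destruct l as [|l'].
  - exists 0; split; [lia|]. intros r Hr. split; [|split].
    + intros; lia.
    + intros <-. left. exists zero; split; [left; auto|].
      rewrite add_zero_l, Nat.sub_0_r. exact H0.
    + intros Hlt. split.
      * intros g Hg. apply HB'; auto. apply (mono _ _ q); [lia|auto].
      * intros x Hx. apply IHr; auto. destruct (H r Hr) as [_ [_ H3]]. destruct (H3 Hlt) as [_ Hb]. apply Hb; auto.
  - exists (S l'); split; auto. intros r Hr. split; [|split].
    + intros Hlt. right. destruct (H r Hr) as [H1 _]. destruct (H1 Hlt) as [x [Hx Hx']].
      right. exists x; split; eauto.
    + intros Heq. destruct (H 0 (Nat.le_0_l _)) as [H1 _]. destruct (H1 ltac:(lia)) as [x [Hx Hx']].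
      right. exists x; split; eauto.
    + intros Hlt. split.
      * intros g Hg. apply HB'; auto. apply (mono _ _ q); [lia|auto].
      * intros x Hx. apply IHr; auto. destruct (H r Hr) as [_ [_ H3]]. destruct (H3 Hlt) as [_ Hb]. apply Hb; auto.
Qed.

Lemma AC TB : forall j x,
  (forall p m, LeftWins TB (add (neg_dyadic j) x) p m -> LeftWins TB x p m) /\
  (forall q, LeftWins TB (add (neg_dyadic j) x) q false -> LeftWins TB x q true).
Proof.
  induction j as [|j IHj]; apply game_ind'; intros xl xr Hl Hr;
    rewrite Forall_forall in Hl, Hr.
  - split.
    + apply (coreA TB [] xl xr); [intros g []|intros g []| |];
      intros x Hx; apply (proj1 (Hl x Hx)) || apply (proj1 (Hr x Hx)).
    + apply (coreC TB [] xl xr); [intros g []| |];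
      intros x Hx; apply (proj1 (Hl x Hx)) || apply (proj1 (Hr x Hx)).
  - split.
    + apply (coreA TB [neg_dyadic j] xl xr);
        [intros g [<-|[]]; apply IHj|intros g [<-|[]]; apply IHj| |];
      intros x Hx; apply (proj1 (Hl x Hx)) || apply (proj1 (Hr x Hx)).
    + apply (coreC TB [neg_dyadic j] xl xr); [intros g [<-|[]]; apply IHj| |];
      intros x Hx; apply (proj1 (Hl x Hx)) || apply (proj1 (Hr x Hx)).
Qed.

Lemma BB TB : forall j x,
  (forall p m, LeftWins TB x p m -> LeftWins TB (add (dyadic j) x) p m) /\
  (forall q, LeftWins TB x q false -> LeftWins TB (add (dyadic j) x) q true).
Proof.
  induction j as [|j IHj]; apply game_ind'; intros xl xr Hl Hr;
    rewrite Forall_forall in Hl, Hr.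
  - split.
    + apply (coreB TB [] xl xr); [intros g []|intros g []| |];
      intros x Hx; apply (proj1 (Hl x Hx)) || apply (proj1 (Hr x Hx)).
    + apply (coreB' TB [] xl xr); [intros g []| |];
      intros x Hx; apply (proj1 (Hl x Hx)) || apply (proj1 (Hr x Hx)).
  - split.
    + apply (coreB TB [dyadic j] xl xr);
        [intros g [<-|[]]; apply IHj|intros g [<-|[]]; apply IHj| |];
      intros x Hx; apply (proj1 (Hl x Hx)) || apply (proj1 (Hr x Hx)).
    + apply (coreB' TB [dyadic j] xl xr); [intros g [<-|[]]; apply IHj| |];
      intros x Hx; apply (proj1 (Hl x Hx)) || apply (proj1 (Hr x Hx)).
Qed.

Lemma ge1 TB j : forall x p m,
  LeftWins TB (add (neg_dyadic (S j)) x) p m -> LeftWins TB (add star x) p m.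
Proof.
  apply (game_ind' (fun x => forall p m, LeftWins TB (add (neg_dyadic (S j)) x) p m -> LeftWins TB (add star x) p m)).
  intros xl xr Hl Hr p m H. rewrite Forall_forall in Hl, Hr.
  change (neg_dyadic (S j)) with (Gm [neg_dyadic j] [zero]) in *.
  unfold star. rewrite LW_add in *. destruct H as [l [Hl0 H]]. exists l; split; auto.
  eapply Cond_mono; [| |exact H]; intros q mk.
  - intros [[g [[<-|[]] Hg]]|[x [Hx Hx']]].
    + left. exists zero; split; [left; auto|]. rewrite add_zero_l. apply (proj1 (AC TB j _)). exact Hg.
    + right. exists x; split; auto.
  - intros [Ha Hb]. split; auto.
Qed.

Lemma ge2 TB j : forall x p m,
  LeftWins TB (add star x) p m -> LeftWins TB (add (dyadic (S j)) x) p m.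
Proof.
  apply (game_ind' (fun x => forall p m, LeftWins TB (add star x) p m -> LeftWins TB (add (dyadic (S j)) x) p m)).
  intros xl xr Hl Hr p m H. rewrite Forall_forall in Hl, Hr.
  change (dyadic (S j)) with (Gm [zero] [dyadic j]) in *.
  unfold star in *. rewrite LW_add in *. destruct H as [l [Hl0 H]]. exists l; split; auto.
  eapply Cond_mono; [| |exact H]; intros q mk.
  - intros [Ha|[x [Hx Hx']]]; auto. right. exists x; split; auto.
  - intros [Ha Hb]. split.
    + intros g [<-|[]]. apply (proj1 (BB TB j _)).
      specialize (Ha zero (or_introl eq_refl)). rewrite add_zero_l in Ha. exact Ha.
    + intros x Hx; auto.
Qed.

Lemma zero_true TB q : ~ LeftWins TB zero q true.
Proof.
  unfold zero. rewrite LW_iff. intros [l [_ H]]. specialize (H 0 (Nat.le_0_l _)).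
  destruct H as [H1 [H2 _]]. destruct l.
  - destruct (H2 eq_refl) as [h [[] _]].
  - destruct (H1 ltac:(lia)) as [[h [[] _]]|[h [[] _]]].
Qed.

Lemma zero_false TB q : LeftWins TB zero q false.
Proof.
  unfold zero. rewrite LW_iff. exists 0; split; [lia|]. intros r _.
  split; [|split]; intros; try lia; try split; intros h [].
Qed.

Lemma negD TB : forall j q m, ~ LeftWins TB (neg_dyadic j) q m.
Proof.
  induction j as [|j IHj]; intros q m.
  - change (neg_dyadic 0) with (Gm [] [zero]). rewrite LW_iff. intros [l [_ H]].
    specialize (H 0 (Nat.le_0_l _)). destruct m; destruct H as [H1 [H2 H3]]; destruct l.
    + destruct (H2 eq_refl) as [h [[] _]].
    + destruct (H1 ltac:(lia)) as [[h [[] _]]|[h [[] _]]].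
    + apply (zero_true TB (q + 0)). apply (H2 eq_refl). left; auto.
    + destruct (H1 ltac:(lia)) as [h [[] _]].
  - change (neg_dyadic (S j)) with (Gm [neg_dyadic j] [zero]). rewrite LW_iff. intros [l [_ H]].
    specialize (H 0 (Nat.le_0_l _)). destruct m; destruct H as [H1 [H2 H3]]; destruct l.
    + destruct (H2 eq_refl) as [h [[<-|[]] Hh]]. eapply IHj; eauto.
    + destruct (H1 ltac:(lia)) as [[h [[<-|[]] Hh]]|[h [[<-|[]] Hh]]]; eapply IHj; eauto.
    + apply (zero_true TB (q + 0)). apply (H2 eq_refl). left; auto.
    + destruct (H1 ltac:(lia)) as [h [[<-|[]] Hh]]. eapply IHj; eauto.
Qed.

Lemma posP TB : forall j q m, LeftWins TB (dyadic j) q m.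
Proof.
  induction j as [|j IHj]; intros q m.
  - change (dyadic 0) with (Gm [zero] []). rewrite LW_iff. exists 0; split; [lia|].
    intros r _. destruct m; split; [|split| |split]; intros; try lia;
      try (intros h []); try (split; intros h []).
    exists zero; split; [left; auto|]. apply zero_false.
  - change (dyadic (S j)) with (Gm [zero] [dyadic j]). rewrite LW_iff. exists 0; split; [lia|].
    intros r _. destruct m; split; [|split| |split]; intros; try lia;
      try (intros h [<-|[]]; apply IHj); try (split; intros h [<-|[]]; apply IHj).
    exists zero; split; [left; auto|]. apply zero_false.
Qed.

Lemma star_TB TB : LeftWins TB star TB true.
Proof.
  unfold star. rewrite LW_iff. exists 0; split; [lia|]. intros r Hr.
  split; [|split]; intros; try lia.
  exists zero; split; [left; auto|]. apply zero_false.
Qed.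

Lemma star_0 TB : ~ LeftWins TB star 0 false.
Proof.
  unfold star. rewrite LW_iff. intros [l [Hl H]]. assert (l = 0) by lia. subst.
  destruct (H 0 (Nat.le_0_l _)) as [_ [H2 _]].
  apply (zero_true TB 0). apply (H2 eq_refl). left; auto.
Qed.

End Aux.

Theorem mainTheorem20 : forall (TB k : nat), 1 <= k ->
  game_gt TB star (neg_dyadic k) /\ game_gt TB (dyadic k) star.
Proof.
  intros TB k Hk. destruct k as [|j]; [lia|]. split; split.
  - intros x p m _ H. eapply ge1; eauto.
  - intros H. specialize (H zero TB true (le_n _)). unfold outcomeL in H.
    rewrite !add_zero_r in H. apply (negD TB (S j) TB true). apply H. apply star_TB.
  - intros x p m _ H. eapply ge2; eauto.
  - intros H. specialize (H zero 0 false (Nat.le_0_l _)). unfold outcomeL in H.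
    rewrite !add_zero_r in H. apply (star_0 TB). apply H. apply posP.
Qed.
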